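(* For every $\Lambda\in\mathcal{X}_d$, the set $T_\varepsilon(\Lambda)=\{t\in\mathbb{R}^{k+r-1}:a_t\Lambda\in\mathcal{S}_\varepsilon\}$ is discrete.
   Context: Let $k,r\ge1$, positive integers $m_1,\dots,m_k,n_1,\dots,n_r$, $d=\sum m_i+\sum n_j$, with fixed norms $\|\cdot\|$ on each $\mathbb{R}^{m_i},\mathbb{R}^{n_j}$, and $\mathbb{S}^l$ the unit sphere of the norm on $\mathbb{R}^l$. $\mathcal{X}_d$ is the space of unimodular lattices in $\mathbb{R}^d$. For $\varepsilon>0$, $L_\varepsilon=\{(x,y)\in(\mathbb{S}^{m_1}\times\cdots\times\mathbb{S}^{m_k}\times\mathbb{S}^{n_1}\times\cdots\times\mathbb{S}^{n_{r-1}})\times\mathbb{R}^{n_r}:\|y\|^{n_r}\le\varepsilon\}$ and $\mathcal{S}_\varepsilon$ is the set of $\Lambda\in\mathcal{X}_d$ having a primitive vector in $L_\varepsilon$. For $t\in\mathbb{R}^{k+r-1}$, $a_t=\mathrm{diag}\big(e^{t_1}I_{m_1},\dots,e^{t_k}I_{m_k},e^{-t_{k+1}}I_{n_1},\dots,e^{-t_{k+r-1}}I_{n_{r-1}},e^{(\sum_{i=1}^{r-1}n_it_{k+i}-\sum_{i=1}^km_it_i)/n_r}I_{n_r}\big)$. *)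

(* Defs.v *)
From HB Require Import structures.
From mathcomp Require Import all_boot all_order all_algebra.
From mathcomp Require Import all_classical all_reals all_analysis.
Set Implicit Arguments. Unset Strict Implicit. Unset Printing Implicit Defensive.
Import Order.TTheory GRing.Theory Num.Theory.
Import numFieldNormedType.Exports.
Local Open Scope classical_set_scope.
Local Open Scope ring_scope.

Section Defs.
Variable R : realType.

Definition is_norm (l : nat) (N : 'rV[R]_l -> R) : Prop :=
  [/\ forall x, N x = 0 -> x = 0,
      forall (a : R) x, N (a *: x) = `|a| * N x &
      forall x y, N (x + y) <= N x + N y].

(* Block dimensions: blocks indexed by 'I_(k + r); the first k blocks have
   dimensions m_1..m_k, the last r blocks n_1..n_r. *)
Definition dims (k r : nat) (m : 'I_k -> nat) (n : 'I_r -> nat)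
  (i : 'I_(k + r)) : nat :=
  match fintype.split i with inl a => m a | inr b => n b end.

(* d = sum m_i + sum n_j; R^d = 'rV[R]_(\sum_i dims i), block i = submxrow v i *)

Definition lattice_of (d : nat) (g : 'M[R]_d) : set 'rV[R]_d :=
  [set v | exists z : 'rV[int]_d, v = map_mx (fun x : int => x%:~R) z *m g].

Definition unimodular_lattice (d : nat) (L : set 'rV[R]_d) : Prop :=
  exists g : 'M[R]_d, `|\det g| = 1 /\ L = lattice_of g.

Definition primitive_in (d : nat) (L : set 'rV[R]_d) (v : 'rV[R]_d) : Prop :=
  [/\ L v, v != 0 &
      ~ exists w : 'rV[R]_d, exists q : nat, [/\ L w, (2 <= q)%N & v = q%:R *: w]].

Definition act (d : nat) (A : 'M[R]_d) (L : set 'rV[R]_d) : set 'rV[R]_d :=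
  [set v *m A | v in L].

(* Exponent of the diagonal entry of a_t on block i, for
   t = (tx, ty) in R^k x R^(r-1) = R^(k + r - 1). *)
Definition at_exp (k r : nat) (m : 'I_k -> nat) (n : 'I_r -> nat)
  (t : 'rV[R]_(k + r.-1)) (i : 'I_(k + r)) : R :=
  let tx := lsubmx t in
  let ty := rsubmx t in
  match fintype.split i with
  | inl a => tx 0 a
  | inr b =>
    match (insub (val b) : option 'I_(r.-1)) with
    | Some b' => - ty 0 b'
    | None =>
      ((\sum_(j < r.-1) (n (widen_ord (leq_pred r) j))%:R * ty 0 j
        - \sum_(a < k) (m a)%:R * tx 0 a) / (n b)%:R)
    end
  end.

Definition a_t (k r : nat) (m : 'I_k -> nat) (n : 'I_r -> nat)
  (t : 'rV[R]_(k + r.-1)) : 'M[R]_(\sum_(i < k + r) dims m n i) :=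
  \mxdiag_(i < k + r) ((expR (at_exp m n t i))%:M : 'M[R]_(dims m n i)).

Definition L_eps (k r : nat) (m : 'I_k -> nat) (n : 'I_r -> nat)
  (N : forall i : 'I_(k + r), 'rV[R]_(dims m n i) -> R) (eps : R)
  : set 'rV[R]_(\sum_(i < k + r) dims m n i) :=
  [set v | forall i : 'I_(k + r),
     if (val i < (k + r).-1)%N then N i (submxrow v i) = 1
     else N i (submxrow v i) ^+ (dims m n i) <= eps].

Definition S_eps (k r : nat) (m : 'I_k -> nat) (n : 'I_r -> nat)
  (N : forall i : 'I_(k + r), 'rV[R]_(dims m n i) -> R) (eps : R)
  (L : set 'rV[R]_(\sum_(i < k + r) dims m n i)) : Prop :=
  exists v, primitive_in L v /\ L_eps N eps v.

Definition T_eps (k r : nat) (m : 'I_k -> nat) (n : 'I_r -> nat)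
  (N : forall i : 'I_(k + r), 'rV[R]_(dims m n i) -> R) (eps : R)
  (L : set 'rV[R]_(\sum_(i < k + r) dims m n i)) : set 'rV[R]_(k + r.-1) :=
  [set t | S_eps N eps (act (a_t m n t) L)].

Definition discrete_set (p : nat) (T : set 'rV[R]_p) : Prop :=
  forall t : 'rV[R]_p, T t -> exists U, nbhs t U /\ T `&` U `<=` [set t].

End Defs.

(* Main.v *)
Require Import Defs.
From HB Require Import structures.
From mathcomp Require Import all_boot all_order all_algebra.
From mathcomp Require Import all_classical all_reals all_analysis.
From mathcomp Require Import ring lra zify.
Import Order.TTheory GRing.Theory Num.Theory.
Import numFieldNormedType.Exports.
Local Open Scope classical_set_scope.
Local Open Scope ring_scope.

Lemma entry_le_norm (R : realType) p q (x : 'M[R]_(p, q)) i j : `|x i j| <= `|x|.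
Proof.
rewrite [leRHS]/Num.Def.normr /= mx_normrE.
by apply/bigmax_geP; right; exists (i, j).
Qed.

Arguments entry_le_norm {R p q}.

Lemma norm_lb (R : realType) (l : nat) (M : 'rV[R]_l -> R) :
  (forall x, M x = 0 -> x = 0) -> (forall a x, M (a *: x) = `|a| * M x) ->
  (forall x y, M (x + y) <= M x + M y) ->
  exists2 c, 0 < c & forall x, c * `|x| <= M x.
Proof.
move=> Mdef Mhom Mtri.
have M0 : M 0 = 0 by rewrite -(scale0r (0 : 'rV[R]_l)) Mhom normr0 mul0r.
have Mge0 x : 0 <= M x.
  have := Mtri x ((-1) *: x); rewrite Mhom scaleN1r subrr M0 normrN normr1 mul1r.
  lra.
pose C := \sum_(j < l) M (delta_mx 0 j).
have MC x : M x <= C * `|x|.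
  have Hx : x = \sum_(j < l) x 0 j *: delta_mx 0 j.
    by rewrite {1}[x]matrix_sum_delta big_ord1.
  rewrite {1}Hx.
  rewrite /C mulr_suml.
  apply: (big_rec2 (fun a b => M a <= b)) => [|j a b _ IH]; first by rewrite M0.
  apply: le_trans (Mtri _ _) _; apply: lerD => //.
  rewrite Mhom mulrC ler_wpM2l //; exact: entry_le_norm.
have C0 : 0 <= C by apply: sumr_ge0 => j _; exact: Mge0.
have Mlip x y : `|M x - M y| <= C * `|x - y|.
  rewrite ler_norml; apply/andP; split.
    have := Mtri (y - x) x; rewrite subrK => H.
    have := MC (y - x); rewrite -normrN opprB; lra.
  have := Mtri (x - y) y; rewrite subrK => H.
  have := MC (x - y); lra.
have Mcont : continuous M.
  move=> x; apply/(@cvgrPdist_lt _ _ _ (nbhs x) (nbhs_filter x)) => e e0.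
  have e1 : 0 < e / (C + 1) by apply: divr_gt0 => //; lra.
  near=> y.
  apply: le_lt_trans (Mlip x y) _.
  have : `|x - y| < e / (C + 1) by near: y; apply: cvgr_dist_lt.
  rewrite ltr_pdivlMr; last lra.
  move=> H; apply: le_lt_trans H; rewrite -subr_ge0.
  have : 0 <= `|x - y| by [].
  nra.
pose S := [set x : 'rV[R]_l | `|x| = 1].
have Scl : closed S.
  have := (continuous_closedP (fun x : 'rV[R]_l => `|x|)).1 (@norm_continuous _ _) _ (@closed_eq R 1).
  by [].
have Sbd : bounded_set S.
  exists 1; split => // y y1 x Sx; rewrite /= Sx ltW //.
have Scp : compact S by exact: bounded_closed_compact.
have Kcp : compact (M @` S).
  by apply: continuous_compact => //; exact: continuous_subspaceT.
have Kcl : closed (M @` S) by exact: compact_closed (@Rhausdorff R) Kcp.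
have nK : ~ (M @` S) 0.
  move=> [x Sx Mx]; have := Mdef _ Mx => x0; move: Sx; rewrite /S /= x0 normr0 => /eqP.
  by rewrite eq_sym oner_eq0.
have := closed_openC Kcl; rewrite openE => /(_ 0 nK) /nbhs_ex [d Hd].
exists d%:num => // x.
have [->|xn0] := eqVneq x 0; first by rewrite normr0 mulr0 Mge0.
have nx0 : 0 < `|x| by rewrite normr_gt0.
pose u := `|x|^-1 *: x.
have Su : S u by rewrite /S /u /= normrZ normrV ?unitfE ?normr_eq0 // normr_id mulVf // normr_eq0.
have Mud : d%:num <= M u.
  rewrite leNgt; apply/negP => Mu.
  apply: (Hd (M u)); last by exists u.
  by rewrite -ball_normE /ball_ /= sub0r normrN ger0_norm ?Mge0.
have Hx : x = `|x| *: u by rewrite /u scalerA mulfV ?scale1r // normr_eq0.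
have -> : M x = `|x| * M u by rewrite {1}Hx Mhom normr_id.
by rewrite mulrC ler_wpM2l.
Unshelve. all: by end_near.
Qed.

Lemma block_act (R : realType) k r (m : 'I_k -> nat) (n : 'I_r -> nat)
  (t : 'rV[R]_(k + r.-1)) (w : 'rV[R]_(\sum_(i < k + r) dims m n i)) i :
  submxrow (w *m a_t m n t) i = expR (at_exp m n t i) *: submxrow w i.
Proof.
by rewrite -[w in LHS]submxrowK /a_t mul_mxrow_mxdiag mxrowK mul_mx_scalar.
Qed.

Lemma at_exp_l (R : realType) k r (m : 'I_k -> nat) (n : 'I_r -> nat)
  (t : 'rV[R]_(k + r.-1)) (a : 'I_k) : at_exp m n t (lshift r a) = lsubmx t 0 a.
Proof. by rewrite /at_exp (unsplitK (inl a : 'I_k + 'I_r)). Qed.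

Lemma at_exp_r (R : realType) k r (m : 'I_k -> nat) (n : 'I_r -> nat)
  (t : 'rV[R]_(k + r.-1)) (b : 'I_r.-1) :
  at_exp m n t (rshift k (widen_ord (leq_pred r) b)) = - rsubmx t 0 b.
Proof.
rewrite /at_exp (unsplitK (inr _ : 'I_k + 'I_r)) /=.
by rewrite (valK b).
Qed.

Theorem lemma5p1 (R : realType) (k r : nat) (m : 'I_k -> nat) (n : 'I_r -> nat)
  (N : forall i : 'I_(k + r), 'rV[R]_(dims m n i) -> R) (eps : R) :
  (0 < k)%N -> (0 < r)%N ->
  (forall a, (0 < m a)%N) -> (forall b, (0 < n b)%N) ->
  (forall i, is_norm (N i)) ->
  0 < eps ->
  forall L : set 'rV[R]_(\sum_(i < k + r) dims m n i),
    unimodular_lattice L -> discrete_set (T_eps N eps L).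
Proof.
move=> k0 r0 m0 n0 Nn eps0 L [g [detg ->]] t0 Tt0.
have N0 i : N i 0 = 0.
  by have [_ Nh _] := Nn i; rewrite -(scale0r (0 : 'rV[R]_(dims m n i))) Nh normr0 mul0r.
have Nge0 i x : 0 <= N i x.
  have [_ Nh Nt] := Nn i.
  have := Nt x ((-1) *: x); rewrite Nh scaleN1r subrr N0 normrN normr1 mul1r.
  lra.
have gU : g \in unitmx by rewrite unitmxE unitfE -normr_eq0 detg oner_eq0.
pose Mf (x : 'rV[R]_(\sum_(i < k + r) dims m n i)) :=
  \sum_i N i (submxrow (x *m g) i).
have [c c0 Hc] : exists2 c, 0 < c & forall x, c * `|x| <= Mf x.
  apply: norm_lb.
  - move=> x /(psumr_eq0P (fun i _ => Nge0 i _)) H.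
    have xg0 : x *m g = 0.
      apply/mxrowP => i; rewrite submxrow0.
      by have [Nd _ _] := Nn i; apply: Nd; apply: H.
    by rewrite -(mulmxK gU x) xg0 mul0mx.
  - move=> a x; rewrite /Mf mulr_sumr; apply: eq_bigr => i _.
    have [_ Nh _] := Nn i.
    by rewrite -scalemxAl -mul_scalar_mx -mul_submxrow mul_scalar_mx Nh.
  - move=> x y; rewrite /Mf mulmxDl -big_split /=; apply: ler_sum => i _.
    have [_ _ Nt] := Nn i.
    by rewrite submxrowD Nt.
pose Tb := `|t0| + 1.
pose S := \sum_(j < r.-1) (n (widen_ord (leq_pred r) j))%:R + \sum_(a < k) (m a)%:R : R.
pose E := Tb * (1 + S).
have Tb0 : 0 < Tb by rewrite /Tb; have := normr_ge0 t0; lra.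
have S0 : 0 <= S by apply: addr_ge0; apply: sumr_ge0 => *; exact: ler0n.
have TbE : Tb <= E.
  rewrite /E -{1}[Tb]mulr1; apply: ler_wpM2l; [exact: ltW | by rewrite lerDl].
have expb t : ball t0 1 t -> forall i, `|at_exp m n t i| <= E.
  move=> bt i.
  have tb j : `|t 0 j| <= Tb.
    apply: le_trans (entry_le_norm t 0 j) _.
    move: bt; rewrite -ball_normE /ball_ /= => bt.
    have := ler_normD t0 (t - t0); rewrite addrC subrK distrC /Tb; lra.
  rewrite /at_exp /=; case: (fintype.split i) => [a|b].
    by rewrite mxE; apply: le_trans (tb _) TbE.
  case: insub => [b'|].
    by rewrite normrN mxE; apply: le_trans (tb _) TbE.
  set A := (X in X / _).
  have nb1 : 1 <= (n b)%:R :> R by rewrite ler1n n0.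
  have HA : `|A / (n b)%:R| <= `|A|.
    rewrite normrM; apply: le_trans (_ : _ <= `|A| * 1) _; last by rewrite mulr1.
    apply: ler_wpM2l => //.
    rewrite ger0_norm ?invr_ge0 ?ler0n // invr_le1 ?unitfE //; first by rewrite pnatr_eq0 -lt0n n0.
    by rewrite ltr0n n0.
  apply: le_trans HA _; rewrite /A.
  apply: le_trans (ler_normB _ _) _.
  have h1 : `|\sum_(j < r.-1) (n (widen_ord (leq_pred r) j))%:R * rsubmx t 0 j|
      <= (\sum_(j < r.-1) (n (widen_ord (leq_pred r) j))%:R) * Tb.
    apply: le_trans (ler_norm_sum _ _ _) _; rewrite mulr_suml; apply: ler_sum => j _.
    by rewrite normrM ger0_norm ?ler0n // ler_wpM2l // mxE.
  have h2 : `|\sum_(a < k) (m a)%:R * lsubmx t 0 a|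
      <= (\sum_(a < k) (m a)%:R) * Tb.
    apply: le_trans (ler_norm_sum _ _ _) _; rewrite mulr_suml; apply: ler_sum => j _.
    by rewrite normrM ger0_norm ?ler0n // ler_wpM2l // mxE.
  rewrite /E /S; nra.
have dpos i : (0 < dims m n i)%N by rewrite /dims; case: (fintype.split i).
pose B := (k + r)%:R * (expR E * (1 + eps)).
have B0 : 0 <= B by rewrite /B; apply: mulr_ge0 => //; apply: mulr_ge0; [exact: expR_ge0 | lra].
pose K := Num.Def.archi_bound (B / c).
have HK : B / c < K%:R by apply: archi_boundP; apply: divr_ge0 => //; exact: ltW.
pose F := {ffun 'I_(\sum_(i < k + r) dims m n i) -> 'I_(K.*2.+1)}.
pose dec (f : F) : 'rV[R]_(\sum_(i < k + r) dims m n i) :=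
  \row_j ((((f j : nat)%:Z - K%:Z)%R)%:~R).
pose tau (w : 'rV[R]_(\sum_(i < k + r) dims m n i)) : 'rV[R]_(k + r.-1) :=
  row_mx (\row_(a < k) - ln (N (lshift r a) (submxrow w (lshift r a))))
         (\row_(b < r.-1) ln (N (rshift k (widen_ord (leq_pred r) b))
                                (submxrow w (rshift k (widen_ord (leq_pred r) b))))).
have key t : T_eps N eps (lattice_of g) t -> ball t0 1 t ->
    exists f : F, t = tau (dec f *m g).
  move=> [v [[[w [z ->] <-] _ _] Lv]] bt.
  set zR := map_mx _ z in Lv *.
  have Hv i : N i (submxrow (zR *m g *m a_t m n t) i)
      = expR (at_exp m n t i) * N i (submxrow (zR *m g) i).
    by have [_ Nh _] := Nn i; rewrite block_act Nh gtr0_norm ?expR_gt0.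
  have Nv i : N i (submxrow (zR *m g *m a_t m n t) i) <= 1 + eps.
    have := Lv i; case: ifP => _ H; first by rewrite H; lra.
    move: H; set y := N i _ => H.
    have [y1|y1] := lerP y 1; first lra.
    have := ler_eXnr (dpos i) (ltW y1); lra.
  have Nw i : N i (submxrow (zR *m g) i) <= expR E * (1 + eps).
    have -> : N i (submxrow (zR *m g) i)
        = expR (- at_exp m n t i) * N i (submxrow (zR *m g *m a_t m n t) i).
      by rewrite Hv mulrA -expRD addNr expR0 mul1r.
    apply: ler_pM; [exact: expR_ge0 | exact: Nge0 | | exact: Nv].
    rewrite ler_expR; have := expb t bt i; rewrite ler_norml => /andP[h1 h2]; lra.
  have Mw : Mf zR <= B.
    rewrite /Mf; apply: le_trans (ler_sum _ (fun i _ => Nw i)) _.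
    by rewrite sumr_const card_ord /B mulr_natl.
  have zRb : `|zR| <= B / c.
    by rewrite ler_pdivlMr // mulrC; apply: le_trans (Hc _) Mw.
  have zb j : `|z 0 j| < K%:Z.
    rewrite -(ltr_int R) intr_norm.
    have -> : (K%:Z)%:~R = K%:R :> R by [].
    apply: le_lt_trans HK; apply: le_trans zRb.
    have := entry_le_norm zR 0 j; by rewrite /zR mxE.
  exists [ffun j => inord (absz (z 0 j + K%:Z)%R)].
  have -> : dec [ffun j => inord (absz (z 0 j + K%:Z)%R)] = zR.
    apply/rowP => j; rewrite /dec /zR !mxE ffunE inordK; last by have := zb j; lia.
    by apply: congr1; have := zb j; lia.
  rewrite -[t]hsubmxK /tau; congr row_mx; apply/rowP => j; rewrite !mxE.
    have := Lv (lshift r j); rewrite /= ifT; last by have := ltn_ord j; lia.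
    rewrite Hv at_exp_l => H.
    have -> : N (lshift r j) (submxrow (zR *m g) (lshift r j)) = expR (- lsubmx t 0 j).
      by rewrite -[RHS]mulr1 -H mulrA -expRD addNr expR0 mul1r.
    by rewrite expRK opprK mxE.
  have := Lv (rshift k (widen_ord (leq_pred r) j)); rewrite /= ifT; last first.
    by have := ltn_ord j; lia.
  rewrite Hv at_exp_r => H.
  set X := N _ _.
  have -> : X = expR (rsubmx t 0 j).
    by rewrite -[RHS]mulr1 -H mulrA -expRD addrN expR0 mul1r.
  by rewrite expRK mxE.
pose tauf (f : F) := tau (dec f *m g).
pose del := \big[Num.min/1]_(f : F | tauf f != t0) `|tauf f - t0|.
have del0 : 0 < del.
  by apply: lt_bigmin => // f; rewrite normr_gt0 subr_eq0.
exists (ball t0 (Num.min 1 del)); split.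
  by apply: nbhsx_ballx; rewrite lt_min ltr01 del0.
move=> t [Tt bt].
have bt1 : ball t0 1 t by apply: le_ball bt; rewrite ge_min lexx.
have [f tf] := key t Tt bt1.
apply/eqP; apply/negPn/negP => tn.
have h1 : del <= `|tauf f - t0| by apply: bigmin_le_cond; rewrite /tauf -tf.
move: bt; rewrite -ball_normE /ball_ /= lt_min => /andP[_].
rewrite /tauf -tf in h1; rewrite distrC; lra.
Qed.
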